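(* Let $\mathcal S\in\Sigma^n$ be a string over an integer alphabet $\Sigma$ and let $\pi:[n]\to[n]$ be an order-preserving permutation for $\mathcal S$. Then $\mathcal S$ can be compressed in $O(|\mathrm{PDA}_\pi|\log n)$ bits of space, i.e., there is a representation of $\mathcal S$ of $O(|\mathrm{PDA}_\pi|\log n)$ bits from which $\mathcal S$ can be reconstructed.
   Context: For a string $\mathcal S$ of length $n$ and $i\neq j$, $\mathrm{rlce}(i,j)$ denotes the length of the longest common prefix of $\mathcal S[i,n]$ and $\mathcal S[j,n]$. A permutation $\pi:[n]\to[n]$ is order-preserving for $\mathcal S$ if for all $i,j\in[n-1]$, $\pi(i)<\pi(j)$ and $\mathcal S[i,i+1]=\mathcal S[j,j+1]$ imply $\pi(i+1)<\pi(j+1)$. The generalized longest previous factor array is $\mathrm{LPF}_\pi[i]=0$ if $\pi(i)=1$ and $\mathrm{LPF}_\pi[i]=\max_{\pi(j)<\pi(i)}\mathrm{rlce}(j,i)$ otherwise. The path decomposition array $\mathrm{PDA}_\pi$ is the set $\{i+\mathrm{LPF}_\pi[i]: i\in[n]\}$ (without duplicates) sorted by the colexicographic order of the prefixes $\mathcal S[1,j]$; $|\mathrm{PDA}_\pi|$ is its number of elements. *)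

(* Defs.v *)
From mathcomp Require Import all_boot fingroup perm.
Unset Printing Implicit Defensive.

(* Strings are [seq nat] (integer alphabet); positions are 0-based internally:
   position i : 'I_n of the code corresponds to position i+1 of the paper. *)

Fixpoint lcp (s t : seq nat) : nat :=
  match s, t with
  | x :: s', y :: t' => if x == y then (lcp s' t').+1 else 0
  | _, _ => 0
  end.

Definition rlce (S : seq nat) (i j : nat) : nat := lcp (drop i S) (drop j S).

Definition order_preserving (S : seq nat) (pi : {perm 'I_(size S)}) : Prop :=
  forall (i j : 'I_(size S)) (Hi : i.+1 < size S) (Hj : j.+1 < size S),
    pi i < pi j ->
    nth 0 S i = nth 0 S j -> nth 0 S i.+1 = nth 0 S j.+1 ->
    pi (Ordinal Hi) < pi (Ordinal Hj).

(* generalized longest previous factor array; pi i = 0 is the paper's pi(i)=1 *)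
Definition LPF (S : seq nat) (pi : {perm 'I_(size S)}) (i : 'I_(size S)) : nat :=
  if (pi i : nat) == 0 then 0
  else \max_(j : 'I_(size S) | pi j < pi i) rlce S j i.

Fixpoint lex_le (s t : seq nat) : bool :=
  match s, t with
  | [::], _ => true
  | _ :: _, [::] => false
  | x :: s', y :: t' => (x < y) || ((x == y) && lex_le s' t')
  end.

(* colexicographic order of the prefixes S[1,j] and S[1,k] (paper's 1-based j,k) *)
Definition colex_le (S : seq nat) (j k : nat) : bool :=
  lex_le (rev (take j S)) (rev (take k S)).

(* PDA_pi : the values (paper's 1-based) i + LPF_pi[i], without duplicates,
   sorted by colexicographic order of the prefixes S[1,j]. *)
Definition PDA (S : seq nat) (pi : {perm 'I_(size S)}) : seq nat :=
  sort (colex_le S)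
    (undup [seq (val i).+1 + LPF S pi i | i <- enum 'I_(size S)]).

(* Main.v *)
Require Import Defs.
From mathcomp Require Import all_boot fingroup perm.
From mathcomp Require Import zify.

Fixpoint bits (w x : nat) : seq bool :=
  match w with 0 => [::] | w'.+1 => odd x :: bits w' x./2 end.
Fixpoint unbits (s : seq bool) : nat :=
  match s with [::] => 0 | b :: s' => b + (unbits s').*2 end.

Lemma size_bits w x : size (bits w x) = w.
Proof. by elim: w x => //= w IH x; rewrite IH. Qed.

Lemma unbitsK w x : x < 2 ^ w -> unbits (bits w x) = x.
Proof.
elim: w x => [|w IH] x /=.
  by rewrite expn0 ltnS leqn0 => /eqP ->.
move=> Hx; rewrite IH; first exact: odd_double_half.
by rewrite ltn_half_double -mul2n -expnS.
Qed.

Fixpoint dech (K f : nat) (bs : seq bool) : seq nat :=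
  match f with
  | 0 => [::]
  | f'.+1 => if bs is [::] then [::] else unbits (take K bs) :: dech K f' (drop K bs)
  end.

Definition enc K (L : seq nat) := flatten [seq bits K x | x <- L].

Lemma size_enc K L : size (enc K L) = K * size L.
Proof.
rewrite /enc; elim: L => [|x L IH] /=; first by rewrite muln0.
by rewrite size_cat size_bits IH mulnS.
Qed.

Lemma dechK K L f : 0 < K -> all (fun x => x < 2 ^ K) L -> size L <= f ->
  dech K f (enc K L) = L.
Proof.
move=> HK; elim: L f => [|x L IH] [|f] //= /andP [Hx Hall] Hf.
rewrite /enc /= -/(enc K L).
case E: (bits K x ++ enc K L) => [|b s].
  by move: (congr1 size E); rewrite size_cat size_bits /=; lia.
rewrite -E take_size_cat ?size_bits // drop_size_cat ?size_bits //.
by rewrite unbitsK // IH.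
Qed.

Definition flat3 (R : seq (nat * nat * nat)) :=
  flatten [seq [:: t.1.1; t.1.2; t.2] | t <- R].
Fixpoint tri (l : seq nat) : seq (nat * nat * nat) :=
  match l with a :: E :: v :: l' => (a, E, v) :: tri l' | _ => [::] end.

Lemma triK R : tri (flat3 R) = R.
Proof. by rewrite /flat3; elim: R => [|[[a E] v] R IH] //=; rewrite IH. Qed.

Lemma size_flat3 R : size (flat3 R) = 3 * size R.
Proof. rewrite /flat3; elim: R => [|t R IH] //=; rewrite IH; lia. Qed.

Lemma all_flat3 (P : pred nat) R :
  all (fun t => [&& P t.1.1, P t.1.2 & P t.2]) R -> all P (flat3 R).
Proof.
rewrite /flat3; elim: R => [|t R IH] //= /andP [/and3P [h1 h2 h3] H].
by rewrite h1 h2 h3 IH.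
Qed.

Definition expl (R : seq (nat * nat * nat)) p :=
  ohead [seq t.2 | t <- R & (t.1.1 == p) && (t.1.2 == p)].
Definition srcp (R : seq (nat * nat * nat)) p :=
  ohead [seq t.2 + (p - t.1.1) | t <- R & (t.1.1 <= p) && (p < t.1.2)].
Fixpoint dec R f p :=
  match f with
  | 0 => 0
  | f'.+1 =>
    match expl R p with
    | Some c => c
    | None => match srcp R p with Some q => dec R f' q | None => 0 end
    end
  end.
Definition interp (L : seq nat) : seq nat :=
  match L with [::] => [::] | n :: r => [seq dec (tri r) n p | p <- iota 0 n] end.
Definition decode (d : nat) (bs : seq bool) : seq nat :=
  let w := find negb bs in
  let body := drop w.+1 bs in
  interp (dech (d.+1 * w) (size body) body).

Lemma oheadS (T : eqType) (s : seq T) x : ohead s = Some x -> x \in s.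
Proof. by case: s => //= y s [->]; rewrite mem_head. Qed.
Lemma oheadN (T : eqType) (s : seq T) x : ohead s = None -> x \in s -> False.
Proof. by case: s. Qed.

Lemma dec_correct (S : seq nat) (rk : nat -> nat) (R : seq (nat * nat * nat)) :
  (forall a E v, (a, E, v) \in R -> a = E -> v = nth 0 S a) ->
  (forall a E v, (a, E, v) \in R -> a < E -> forall p, a <= p < E ->
     [/\ v + (p - a) < size S, nth 0 S (v + (p - a)) = nth 0 S p
       & rk (v + (p - a)) < rk p]) ->
  (forall p, p < size S -> (exists v, (p, p, v) \in R) \/
     (exists a E v, (a, E, v) \in R /\ a <= p < E)) ->
  forall f p, p < size S -> rk p < f -> dec R f p = nth 0 S p.
Proof.
move=> H1 H2 H3; elim=> [|f IH] p Hp Hf //=.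
case E1: (expl R p) => [c|].
  move/oheadS: E1 => /mapP [[[a E] v]]; rewrite mem_filter /=.
  move=> /andP [/andP [/eqP Ha /eqP HE] HR] ->; subst.
  exact: H1 HR erefl.
case E2: (srcp R p) => [q|].
  move/oheadS: E2 => /mapP [[[a E] v]]; rewrite mem_filter /=.
  move=> /andP [Hap HR] ->.
  have HaE : a < E by case/andP: Hap => h1 h2; exact: leq_ltn_trans h1 h2.
  have [Hq HS Hr] := H2 a E v HR HaE p Hap.
  rewrite IH // ?HS //; lia.
exfalso; case: (H3 p Hp) => [[v Hv]|[a [E [v [Hv Hap]]]]].
  apply: (@oheadN _ _ v E1); apply/mapP; exists (p, p, v) => //.
  by rewrite mem_filter /= !eqxx.
apply: (@oheadN _ _ (v + (p - a)) E2); apply/mapP; exists (a, E, v) => //.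
by rewrite mem_filter /= Hap.
Qed.

Definition rk {S : seq nat} (pi : {perm 'I_(size S)}) (p : nat) : nat :=
  if (insub p : option 'I_(size S)) is Some i then val (pi i) else 0.

Lemma rkE {S : seq nat} (pi : {perm 'I_(size S)}) (i : 'I_(size S)) : rk pi (val i) = pi i.
Proof. by rewrite /rk valK. Qed.

Lemma op_nat {S : seq nat} (pi : {perm 'I_(size S)}) : order_preserving S pi ->
  forall p q, p.+1 < size S -> q.+1 < size S -> rk pi p < rk pi q ->
  nth 0 S p = nth 0 S q -> nth 0 S p.+1 = nth 0 S q.+1 -> rk pi p.+1 < rk pi q.+1.
Proof.
move=> Hop p q Hp Hq H1 H2 H3.
have E p' (H : p' < size S) : rk pi p' = pi (Ordinal H) := rkE pi (Ordinal H).
rewrite (E _ Hp) (E _ Hq).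
rewrite (E _ (ltnW Hp)) (E _ (ltnW Hq)) in H1.
exact: (Hop (Ordinal (ltnW Hp)) (Ordinal (ltnW Hq)) Hp Hq H1 H2 H3).
Qed.

Lemma lcpP s t k : k < lcp s t ->
  [/\ k < size s, k < size t & nth 0 s k = nth 0 t k].
Proof.
elim: s t k => [|x s IH] [|y t] k //=.
case: eqP => // -> ; case: k => [|k] //=.
by rewrite ltnS => /IH [h1 h2 h3].
Qed.

Lemma lcp_le s t : lcp s t <= size t.
Proof.
elim: s t => [|x s IH] [|y t] //=; case: eqP => // _; by rewrite ltnS.
Qed.

Lemma chain {S : seq nat} (pi : {perm 'I_(size S)}) : order_preserving S pi ->
  forall j i, rk pi j < rk pi i -> forall t, t < rlce S j i ->
  [/\ j + t < size S, i + t < size S, nth 0 S (j + t) = nth 0 S (i + t)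
    & rk pi (j + t) < rk pi (i + t)].
Proof.
move=> Hop j i Hr.
have B t : t < rlce S j i ->
    [/\ j + t < size S, i + t < size S & nth 0 S (j + t) = nth 0 S (i + t)].
  move=> /lcpP [h1 h2 h3]; rewrite !size_drop in h1 h2; rewrite !nth_drop in h3.
  split=> //; lia.
elim=> [|t IH] Ht.
  have [h1 h2 h3] := B 0 Ht; rewrite !addn0 in h1 h2 h3 *; by split.
have [h1 h2 h3] := B _ Ht; have [g1 g2 g3 g4] := IH (ltnW Ht).
split=> //; rewrite !addnS in h1 h2 h3 *.
exact: op_nat.
Qed.

Lemma LPF_le {S : seq nat} (pi : {perm 'I_(size S)}) (i : 'I_(size S)) : LPF S pi i <= size S - i.
Proof.
rewrite /LPF; case: ifP => // _; apply/bigmax_leqP => j _.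
by rewrite /rlce (leq_trans (lcp_le _ _)) // size_drop.
Qed.

Definition src {S : seq nat} (pi : {perm 'I_(size S)}) (i : 'I_(size S)) : 'I_(size S) :=
  odflt i [pick j | (pi j < pi i) && (rlce S j i == LPF S pi i)].

Lemma src_spec {S : seq nat} (pi : {perm 'I_(size S)}) (i : 'I_(size S)) : 0 < LPF S pi i ->
  pi (src pi i) < pi i /\ rlce S (src pi i) i = LPF S pi i.
Proof.
move=> H; rewrite /src; case: pickP => [j /andP [h1 /eqP h2]|Hn] //=.
exfalso.
have Hpi : (pi i : nat) != 0 by move: H; rewrite /LPF; case: ifP.
have EL : LPF S pi i = \max_(j | pi j < pi i) rlce S j i by rewrite /LPF (negbTE Hpi).
rewrite EL in H Hn.
set M := \max_(j | pi j < pi i) rlce S j i in H Hn.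
have : M <= M.-1.
  apply/bigmax_leqP => j Hj.
  have := Hn j; rewrite /= Hj /= => /negbT Hne.
  have := @leq_bigmax_cond _ (fun j => pi j < pi i) (fun j => rlce S j i) j Hj.
  rewrite -/M => Hle; lia.
lia.
Qed.

Definition eP {S : seq nat} (pi : {perm 'I_(size S)}) (i : 'I_(size S)) : nat :=
  nat_of_ord i + LPF S pi i.

Definition firstb {S : seq nat} (pi : {perm 'I_(size S)}) (i : 'I_(size S)) : bool :=
  [forall j : 'I_(size S), ((j < i) && (0 < LPF S pi j)) ==> (eP pi j != eP pi i)].

Definition Rz {S : seq nat} (pi : {perm 'I_(size S)}) : seq (nat * nat * nat) :=
  [seq (nat_of_ord i, nat_of_ord i, nth 0 S i) | i : 'I_(size S) <- enum 'I_(size S) & LPF S pi i == 0].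
Definition Rc {S : seq nat} (pi : {perm 'I_(size S)}) : seq (nat * nat * nat) :=
  [seq (nat_of_ord i, eP pi i, nat_of_ord (src pi i)) |
     i : 'I_(size S) <- enum 'I_(size S) & (0 < LPF S pi i) && firstb pi i].
Definition Rall {S : seq nat} (pi : {perm 'I_(size S)}) := Rz pi ++ Rc pi.

Lemma cnt n (s : seq 'I_n) (g : 'I_n -> nat) (t : seq nat) :
  uniq s -> {in s &, injective g} -> (forall x, x \in s -> g x \in t) ->
  size s <= size (undup t).
Proof.
move=> Hu Hi Hs; rewrite -(size_map g); apply: uniq_leq_size.
  by rewrite map_inj_in_uniq.
by move=> y /mapP [x Hx ->]; rewrite mem_undup; exact: Hs.
Qed.

Lemma size_Rall {S : seq nat} (pi : {perm 'I_(size S)}) : size (Rall pi) <= 2 * size (PDA S pi).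
Proof.
rewrite /Rall /PDA size_sort size_cat /Rz /Rc !size_map.
set T := [seq _ | _ <- _].
set g := fun i : 'I_(size S) => (val i).+1 + LPF S pi i.
have HT x : g x \in T by apply: map_f; rewrite mem_enum.
have H1 : size [seq i <- enum 'I_(size S) | LPF S pi i == 0] <= size (undup T).
  apply: (@cnt _ _ g); first by rewrite filter_uniq ?enum_uniq.
    move=> x y; rewrite !mem_filter /g => /andP [/eqP hx _] /andP [/eqP hy _].
    rewrite hx hy => h; apply: val_inj; lia.
  by move=> x _; exact: HT.
have H2 : size [seq i <- enum 'I_(size S) | (0 < LPF S pi i) && firstb pi i]
    <= size (undup T).
  apply: (@cnt _ _ g); first by rewrite filter_uniq ?enum_uniq.
    move=> x y; rewrite !mem_filter /g => /andP [/andP [hx fx] _] /andP [/andP [hy fy] _] h.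
    have h' : (nat_of_ord x).+1 + LPF S pi x = (nat_of_ord y).+1 + LPF S pi y := h.
    have he : eP pi x = eP pi y by rewrite /eP; lia.
    case: (ltngtP x y) => [hxy|hxy|hxy]; last by apply: val_inj.
      by move/forallP: fy => /(_ x); rewrite hxy hx he eqxx.
    by move/forallP: fx => /(_ y); rewrite hxy hy he eqxx.
  by move=> x _; exact: HT.
by rewrite mul2n -addnn; exact: leq_add H1 H2.
Qed.

Lemma Rall_ok {S : seq nat} (pi : {perm 'I_(size S)}) : order_preserving S pi ->
  [/\ (forall a E v, (a, E, v) \in Rall pi -> a = E -> v = nth 0 S a),
      (forall a E v, (a, E, v) \in Rall pi -> a < E -> forall p, a <= p < E ->
        [/\ v + (p - a) < size S, nth 0 S (v + (p - a)) = nth 0 S p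
          & rk pi (v + (p - a)) < rk pi p]) &
      (forall p, p < size S -> (exists v, (p, p, v) \in Rall pi) \/
        (exists a E v, (a, E, v) \in Rall pi /\ a <= p < E))].
Proof.
move=> Hop; split.
- move=> a E v; rewrite mem_cat => /orP [] /mapP [i]; rewrite mem_filter.
    by move=> _ [-> _ ->].
  move=> /andP [/andP [Hl _] _] [-> -> _]; rewrite /eP => h; exfalso.
  have h' : (nat_of_ord i : nat) = nat_of_ord i + LPF S pi i := h. lia.
- move=> a E v; rewrite mem_cat => /orP [] /mapP [i]; rewrite mem_filter.
    by move=> _ [-> -> _]; rewrite ltnn.
  move=> /andP [/andP [Hl _] _] [-> -> ->] _ p /andP [hp1 hp2].
  have [s1 s2] := src_spec pi i Hl.
  have Hr : rk pi (src pi i) < rk pi i by rewrite !rkE.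
  have Ht : p - i < rlce S (src pi i) i by rewrite s2; move: hp2; rewrite /eP; lia.
  have [g1 g2 g3 g4] := @chain _ pi Hop _ _ Hr _ Ht.
  have Ep : i + (p - i) = p by lia.
  by rewrite Ep in g2 g3 g4.
- move=> p Hp; set ip := Ordinal Hp.
  case: (posnP (LPF S pi ip)) => HL.
    left; exists (nth 0 S p); rewrite mem_cat; apply/orP; left.
    apply/mapP; exists ip => //; by rewrite mem_filter mem_enum HL eqxx.
  right.
  have Hc : (fun k => (0 < LPF S pi k) && (eP pi k == eP pi ip)) ip by rewrite /= HL eqxx.
  case: (@arg_minnP _ ip (fun k => (0 < LPF S pi k) && (eP pi k == eP pi ip)) (fun k => nat_of_ord k) Hc) => k /andP [Hk1 /eqP Hk2] Hmin.
  exists (nat_of_ord k), (eP pi k), (nat_of_ord (src pi k)); split.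
    rewrite mem_cat; apply/orP; right; apply/mapP; exists k => //.
    rewrite mem_filter mem_enum Hk1 andbT /=.
    apply/forallP => j; apply/implyP => /andP [Hjk Hj]; apply/negP => /eqP Hej.
    have := Hmin j; rewrite /= Hj Hej Hk2 eqxx => /(_ isT); lia.
  have := Hmin ip; rewrite /= HL eqxx => /(_ isT) Hkp.
  rewrite Hk2 /eP /=; apply/andP; split=> //; lia.
Qed.

Lemma find_pref w body : find negb (nseq w true ++ false :: body) = w.
Proof. by elim: w => //= w ->. Qed.
Lemma drop_pref w body : drop w.+1 (nseq w true ++ false :: body) = body.
Proof. elim: w => [|w IH] /=; [exact: drop0 | exact: IH]. Qed.

Theorem theorem16 :
  forall d : nat,
  exists (D : seq bool -> seq nat) (c : nat),
  forall (S : seq nat) (pi : {perm 'I_(size S)}),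
    all (fun a => a < (size S) ^ d) S ->
    order_preserving S pi ->
    exists b : seq bool,
      size b <= c * size (PDA S pi) * (trunc_log 2 (size S)).+1 /\ D b = S.
Proof.
move=> d; exists (decode d), (2 + 7 * d.+1) => S pi Hall Hop.
case: (posnP (size S)) => Hn.
  by exists [::]; split=> //; move/size0nil: Hn => ->.
set w := (trunc_log 2 (size S)).+1.
set K := d.+1 * w.
set R := Rall pi.
set L := size S :: flat3 R.
have Hw : 0 < w by [].
have HnK : size S < 2 ^ K.
  apply: (leq_trans (@trunc_log_ltn 2 (size S) isT)); rewrite -/w leq_exp2l //; lia.
have HnK' x : x <= size S -> x < 2 ^ K by move=> h; exact: leq_ltn_trans h HnK.
have HdK x : x < size S ^ d -> x < 2 ^ K.
  move=> h; case: (posnP d) => Hd.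
    by move: h; rewrite Hd expn0 ltnS leqn0 => /eqP ->; rewrite expn_gt0.
  apply: (leq_trans h); apply: (@leq_trans ((2 ^ w) ^ d)).
    by rewrite leq_exp2r //; apply: ltnW; exact: (@trunc_log_ltn 2 (size S) isT).
  by rewrite -expnM leq_exp2l //; rewrite /K; lia.
have HallL : all (fun x => x < 2 ^ K) L.
  rewrite /L /= HnK /=; apply: all_flat3; rewrite /R /Rall all_cat.
  apply/andP; split; apply/allP => t /mapP [i]; rewrite mem_filter => /andP [_ _] -> /=.
    apply/and3P; split; [apply: HnK'; exact: ltnW | apply: HnK'; exact: ltnW |].
    apply: HdK; exact: (allP Hall) _ (mem_nth 0 (ltn_ord i)).
  have := LPF_le pi i => Hle.
  apply/and3P; split; apply: HnK'; [exact: ltnW | rewrite /eP; have := ltn_ord i; lia | exact: ltnW].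
have Hpos : 0 < size (PDA S pi).
  rewrite /PDA size_sort.
  have : (val (Ordinal Hn)).+1 + LPF S pi (Ordinal Hn) \in
      undup [seq (val i).+1 + LPF S pi i | i <- enum 'I_(size S)].
    by rewrite mem_undup; apply: map_f; rewrite mem_enum.
  by case: (undup _).
exists (nseq w true ++ false :: enc K L); split.
  have EL : size (enc K L) = K * (3 * size R).+1 by rewrite size_enc /L -(size_flat3 R).
  rewrite size_cat size_nseq -cat1s size_cat EL /=.
  have := size_Rall pi; rewrite -/R.
  set r := size (PDA S pi); set z := size R => Hz.
  rewrite /K; nia.
rewrite /decode find_pref drop_pref dechK //; last first.
  by rewrite size_enc; apply: leq_pmull.
rewrite /L /= triK.
have [H1 H2 H3] := Rall_ok pi Hop.
apply: (@eq_from_nth _ 0); first by rewrite size_map size_iota.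
move=> p; rewrite size_map size_iota => Hp.
rewrite (nth_map 0) ?size_iota // nth_iota // add0n.
apply: (@dec_correct S (rk pi) R H1 H2 H3) => //.
by have := rkE pi (Ordinal Hp); rewrite /= => ->; exact: ltn_ord.
Qed.
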